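(* For every even $N\ge2$, the eigenvalue $r_{1,N}(z)$ has a pole of order $2N$ at $z=1$ and the eigenvalue $r_{2,N}(z)$ has a zero of order $2N$ at $z=1$.
   Context: Fix $0<\alpha,\beta<1$. For $\varepsilon\in(0,1)$: $\phi_{\varepsilon,1}(z)=\begin{pmatrix}1&\varepsilon^2z^{-1}\\ \varepsilon^{-2}&1\end{pmatrix}$, $\phi_{\varepsilon,2}(z)=\frac{1}{1-z^{-1}}\phi_{\varepsilon,1}(z)$, $\phi_3(z)=\begin{pmatrix}1&z^{-1}\\1&1\end{pmatrix}$, $\phi_4(z)=\frac{1}{1-z^{-1}}\phi_3(z)$, $\Phi_\varepsilon=\phi_{\varepsilon,1}\phi_{\varepsilon,2}\phi_3\phi_4$. Let $\phi_N(z)=\Phi_\alpha(z)^{N/2}\Phi_\beta(z)^{N/2}$ (determinant $1$), $t_N=\operatorname{tr}\phi_N$; in a punctured neighborhood of $1$, $r_{1,N}=\frac12(t_N+\sqrt{t_N^2-4})$, $r_{2,N}=\frac12(t_N-\sqrt{t_N^2-4})$ where $\sqrt{t^2-4}=t(1-4/t^2)^{1/2}$ (principal branch, valid for $|t|$ large). *)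

(* Defs.v *)
From HB Require Import structures.
From mathcomp Require Import all_boot all_order all_algebra.
From mathcomp Require Import complex.
From mathcomp Require Import all_classical all_reals all_analysis.
Set Implicit Arguments. Unset Strict Implicit. Unset Printing Implicit Defensive.
Import Order.TTheory GRing.Theory Num.Theory.
Local Open Scope ring_scope.

Section Defs.
Variable R : realType.
Local Notation C := R[i].

Definition mx2 (a b c d : C) : 'M[C]_2 :=
  \matrix_(i < 2, j < 2)
     if (i == 0 :> nat) then (if (j == 0 :> nat) then a else b)
     else (if (j == 0 :> nat) then c else d).

Definition phi1 (eps : R) (z : C) : 'M[C]_2 :=
  mx2 1 (((eps ^+ 2)%:C)%C * z^-1) (((eps ^+ 2)^-1)%:C)%C 1.
Definition phi2 (eps : R) (z : C) : 'M[C]_2 :=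
  (1 - z^-1)^-1 *: phi1 eps z.
Definition phi3 (z : C) : 'M[C]_2 := mx2 1 z^-1 1 1.
Definition phi4 (z : C) : 'M[C]_2 := (1 - z^-1)^-1 *: phi3 z.
Definition Phi (eps : R) (z : C) : 'M[C]_2 :=
  phi1 eps z *m phi2 eps z *m phi3 z *m phi4 z.
Definition phiN (alpha beta : R) (N : nat) (z : C) : 'M[C]_2 :=
  Phi alpha z ^+ N./2 *m Phi beta z ^+ N./2.
Definition tN (alpha beta : R) (N : nat) (z : C) : C := \tr (phiN alpha beta N z).
(* sqrt(t^2 - 4) := t (1 - 4/t^2)^{1/2}, principal branch *)
Definition sqrt_t2m4 (t : C) : C := t * sqrtc (1 - 4 / t ^+ 2).
Definition r1N (alpha beta : R) (N : nat) (z : C) : C :=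
  (tN alpha beta N z + sqrt_t2m4 (tN alpha beta N z)) / 2.
Definition r2N (alpha beta : R) (N : nat) (z : C) : C :=
  (tN alpha beta N z - sqrt_t2m4 (tN alpha beta N z)) / 2.

Definition holomorphic_near (g : C -> C) (a : C) : Prop :=
  \forall z \near (a : C^o), derivable (g : C^o -> C^o) z 1.

Definition has_pole_of_order (f : C -> C) (a : C) (m : nat) : Prop :=
  exists g : C -> C, [/\ holomorphic_near g a, g a != 0 &
    \forall z \near dnbhs (a : C^o), f z = g z / (z - a) ^+ m].

Definition has_zero_of_order (f : C -> C) (a : C) (m : nat) : Prop :=
  exists g : C -> C, [/\ holomorphic_near g a, g a != 0 &
    \forall z \near dnbhs (a : C^o), f z = (z - a) ^+ m * g z].

End Defs.

(* Main.v *)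
Require Import Defs.
From HB Require Import structures.
From mathcomp Require Import all_boot all_order all_algebra.
From mathcomp Require Import complex.
From mathcomp Require Import all_classical all_reals all_analysis.
From mathcomp Require Import ring lra.
Import Order.TTheory GRing.Theory Num.Theory.
Set Implicit Arguments. Unset Strict Implicit. Unset Printing Implicit Defensive.
Local Open Scope ring_scope.
Section S.
Variable R : realType.
Local Notation C := R[i].
Local Notation ReC := (@complex.Re R).

Definition Mm (eps : R) (z : C) : 'M[C]_2 :=
  phi1 eps z *m phi1 eps z *m phi3 z *m phi3 z.

Lemma PhiE eps z : Phi eps z = ((1 - z^-1)^-1) ^+ 2 *: Mm eps z.
Proof.
rewrite /Phi /phi2 /phi4 /Mm -(@scalemxAr C 2 2 2) -(@scalemxAr C 2 2 2) -!(@scalemxAl C 2 2 2) scalerA expr2.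
by rewrite -!mulmxA.
Qed.

Definition Pf (a b : R) (N : nat) (z : C) : C :=
  z ^+ (2 * N) * \tr (Mm a z ^+ N./2 *m Mm b z ^+ N./2).

Lemma tNE a b N z : ~~ odd N -> z != 0 -> z != 1 ->
  tN a b N z = Pf a b N z / (z - 1) ^+ (2 * N).
Proof.
move=> hN hz0 hz1.
rewrite /tN /phiN !PhiE !exprZn -(@scalemxAl C 2 2 2) -(@scalemxAr C 2 2 2) scalerA mxtraceZ /Pf.
have hc : (1 - z^-1)^-1 = z / (z - 1).
  by rewrite -invf_div mulrBl divff // mul1r.
rewrite hc -!exprM -exprD.
have -> : (2 * N./2 + 2 * N./2 = 2 * N)%N.
  by rewrite -mulnDr addnn -[in RHS](odd_double_half N) (negbTE hN) add0n.
by rewrite exprMn exprVn mulrAC.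
Qed.

Definition posm (A : 'M[C]_2) := forall i j, 0 < A i j.

Lemma posm_mul A B : posm A -> posm B -> posm (A *m B).
Proof.
move=> hA hB i j; rewrite mxE big_ord_recr big_ord_recr big_ord0 /= add0r.
by apply: addr_gt0; apply: mulr_gt0.
Qed.

Lemma posm_exp A n : posm A -> posm (A ^+ n.+1).
Proof.
move=> hA; elim: n => [|n IH]; first by rewrite expr1.
by rewrite exprS; apply: posm_mul.
Qed.

Lemma posm_tr A : posm A -> 0 < \tr A.
Proof.
move=> hA; rewrite /mxtrace big_ord_recr big_ord_recr big_ord0 /= add0r.
by apply: addr_gt0.
Qed.

Lemma posm_mx2 (a b c d : C) : 0 < a -> 0 < b -> 0 < c -> 0 < d ->
  posm (mx2 a b c d).
Proof. by move=> ha hb hc hd i j; rewrite mxE; do 2 case: ifP. Qed.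

Lemma ltc0R (x : R) : (0 < (x%:C)%C) = (0 < x).
Proof. by rewrite ltcE /= eqxx. Qed.

Lemma posm_Mm eps : 0 < eps -> posm (Mm eps 1).
Proof.
move=> he.
have h1 : posm (phi1 eps 1).
  apply: posm_mx2; rewrite ?ltr01 // ?invr1 ?mulr1 ltc0R.
    by rewrite exprn_gt0.
  by rewrite invr_gt0 exprn_gt0.
have h3 : posm (phi3 (R:=R) 1).
  by apply: posm_mx2; rewrite ?invr1 ltr01.
by rewrite /Mm; apply: posm_mul => //; apply: posm_mul => //; apply: posm_mul.
Qed.

Lemma Pf1 a b N : 0 < a -> 0 < b -> (2 <= N)%N -> ~~ odd N -> Pf a b N 1 != 0.
Proof.
move=> ha hb hN hodd; rewrite /Pf expr1n mul1r.
case hk : N./2 => [|k].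
  move: hN; rewrite -(odd_double_half N) (negbTE hodd) add0n hk //.
apply/lt0r_neq0/posm_tr/posm_mul; by apply: posm_exp; apply: posm_Mm.
Qed.

Definition dv (f : C -> C) (z : C) := derivable (f : C^o -> C^o) z 1.

Lemma dv_cst (c z : C) : dv (fun _ => c) z.
Proof. exact: (@derivable_cst C C^o C^o c z 1). Qed.

Lemma dv_id (z : C) : dv (fun w => w) z.
Proof. exact: (@derivable_id C C^o z 1). Qed.

Lemma dv_add f g z : dv f z -> dv g z -> dv (fun w => f w + g w) z.
Proof. move=> hf hg.
have H := derivableD hf hg.
exact H. Qed.

Lemma dv_mul f g z : dv f z -> dv g z -> dv (fun w => f w * g w) z.
Proof. move=> hf hg.
have H := derivableM hf hg.
exact H. Qed.

Lemma dv_opp f z : dv f z -> dv (fun w => - f w) z.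
Proof. move=> hf.
have H := derivableN hf.
exact H. Qed.

Lemma dv_inv f z : f z != 0 -> dv f z -> dv (fun w => (f w)^-1) z.
Proof. move=> h0 hf.
have H := derivableV h0 hf.
exact H. Qed.

Lemma dv_sub f g z : dv f z -> dv g z -> dv (fun w => f w - g w) z.
Proof. move=> hf hg. have H := dv_add hf (dv_opp hg). exact H. Qed.

Lemma dv_exp f n z : dv f z -> dv (fun w => f w ^+ n) z.
Proof.
move=> hf; elim: n => [|n IH].
  have H := @dv_cst 1 z. exact H.
have -> : (fun w => f w ^+ n.+1) = (fun w => f w * f w ^+ n).
  by apply: funext => w; rewrite exprS.
have H := dv_mul hf IH. exact H.
Qed.

Lemma dv_comp f g z : dv f z -> dv g (f z) -> dv (fun w => g (f w)) z.
Proof.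
move=> hf hg.
have df : differentiable (f : C^o -> C^o) (z : C^o).
  apply/derivable1_diffP.
  exact hf.
have dg : differentiable (g : C^o -> C^o) (f z : C^o).
  apply/derivable1_diffP.
  exact hg.
have H := differentiable_comp df dg.
apply/derivable1_diffP.
exact H.
Qed.

Lemma dv_cont f z : dv f z -> {for z, continuous (f : C^o -> C^o)}.
Proof.
move=> hf.
apply: differentiable_continuous.
apply/derivable1_diffP.
exact hf.
Qed.

Lemma dv_sum2 (h : 'I_2 -> C -> C) z : (forall k, dv (h k) z) ->
  dv (fun w => \sum_(k < 2) h k w) z.
Proof.
move=> H.
have e : (fun w => \sum_(k < 2) h k w) = (fun w => h ord0 w + h (@Ordinal 2 1 isT) w).
  apply: funext => w; rewrite big_ord_recl big_ord_recl big_ord0 addr0.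
  by congr (_ + h _ w); apply: val_inj.
rewrite e; have H2 := dv_add (H ord0) (H (@Ordinal 2 1 isT)); exact H2.
Qed.

Definition holm (F : C -> 'M[C]_2) := forall i j z, z != 0 -> dv (fun w => F w i j) z.

Lemma holm_mul F G : holm F -> holm G -> holm (fun w => F w *m G w).
Proof.
move=> hF hG i j z hz.
have e : (fun w => (F w *m G w) i j) = (fun w => \sum_(k < 2) (fun k w => F w i k * G w k j) k w).
  by apply: funext => w; rewrite mxE.
rewrite e; apply: dv_sum2 => k.
have H := dv_mul (hF i k z hz) (hG k j z hz); exact H.
Qed.

Lemma holm_exp F n : holm F -> holm (fun w => F w ^+ n).
Proof.
move=> hF; elim: n => [|n IH].
  move=> i j z _; have H := @dv_cst ((1 : 'M[C]_2) i j) z; exact H.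
have e : (fun w => F w ^+ n.+1) = (fun w => F w *m F w ^+ n).
  by apply: funext => w; rewrite exprS mulmxE.
by rewrite e; apply: holm_mul.
Qed.

Lemma holm_mx2 (a b c d : C -> C) :
  (forall z, z != 0 -> dv a z) -> (forall z, z != 0 -> dv b z) ->
  (forall z, z != 0 -> dv c z) -> (forall z, z != 0 -> dv d z) ->
  holm (fun w => mx2 (a w) (b w) (c w) (d w)).
Proof.
move=> ha hb hc hd i j z hz.
have e : (fun w => mx2 (a w) (b w) (c w) (d w) i j) =
  (fun w => if (i == 0 :> nat) then (if (j == 0 :> nat) then a w else b w)
     else (if (j == 0 :> nat) then c w else d w)).
  by apply: funext => w; rewrite mxE.
rewrite e; case: (i == 0 :> nat); case: (j == 0 :> nat); auto.
Qed.

Lemma dv_inv_id z : z != 0 -> dv (fun w => w^-1) z.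
Proof. move=> hz; have H := dv_inv hz (@dv_id z); exact H. Qed.

Lemma holm_phi1 eps : holm (phi1 eps).
Proof.
have H0 := @holm_mx2 (fun _ => 1) (fun w => ((eps ^+ 2)%:C)%C * w^-1) (fun _ => (((eps ^+ 2)^-1)%:C)%C) (fun _ => 1).
apply: H0 => z hz.
- exact: dv_cst.
- have H := dv_mul (@dv_cst ((eps ^+ 2)%:C)%C z) (dv_inv_id hz); exact H.
- exact: dv_cst.
- exact: dv_cst.
Qed.

Lemma holm_phi3 : holm (@phi3 R).
Proof.
have H0 := @holm_mx2 (fun _ => 1) (fun w => w^-1) (fun _ => 1) (fun _ => 1).
apply: H0 => z hz.
- exact: dv_cst.
- exact: dv_inv_id.
- exact: dv_cst.
- exact: dv_cst.
Qed.

Lemma holm_Mm eps : holm (Mm eps).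
Proof.
have h1 := @holm_phi1 eps; have h3 := holm_phi3.
have H1 := holm_mul h1 h1. have H2 := holm_mul H1 h3. have H3 := holm_mul H2 h3.
rewrite /Mm; exact H3.
Qed.

Lemma dv_Pf a b N z : z != 0 -> dv (Pf a b N) z.
Proof.
move=> hz; rewrite /Pf.
have hM : holm (fun w => Mm a w ^+ N./2 *m Mm b w ^+ N./2).
  by apply: holm_mul; apply: holm_exp; apply: holm_Mm.
have e : (fun w => \tr (Mm a w ^+ N./2 *m Mm b w ^+ N./2)) =
   (fun w => \sum_(k < 2) (fun k w => (Mm a w ^+ N./2 *m Mm b w ^+ N./2) k k) k w).
  by apply: funext.
have ht : dv (fun w => \tr (Mm a w ^+ N./2 *m Mm b w ^+ N./2)) z.
  by rewrite e; apply: dv_sum2 => k; apply: hM.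
have H := dv_mul (@dv_exp _ (2 * N) _ (@dv_id z)) ht; exact H.
Qed.
Lemma Re_sqrtc_ge0 (x : C) : 0 <= ReC (sqrtc x).
Proof. by case: x => a b; rewrite /sqrtc /= sqrtr_ge0. Qed.

Lemma Re_sqrtc_big (x : C) : 1/4 <= ReC x -> 1/2 <= ReC (sqrtc x).
Proof.
move=> hx; have h := sqr_sqrtc x; have hp := Re_sqrtc_ge0 x.
move: h hp; case: (sqrtc x) => p q /= h hp.
move: hx; rewrite -h expr2 /= => hx.
nra.
Qed.

Lemma one_le_norm (u v : C) : 1/2 <= ReC u -> 1/2 <= ReC v -> 1 <= `|u + v|.
Proof.
move=> hu hv; apply: le_trans (normc_ge_Re (u + v)).
rewrite (_ : 1 = (1:R)%:C)%C // lecR.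
move: hu hv; case: u => a b; case: v => c d /= hu hv.
rewrite ger0_norm; lra.
Qed.

Lemma Re_from_norm (x : C) (r : R) : `|x - 1| < r%:C%C -> 1 - r < ReC x.
Proof.
move=> h; have h2 := le_lt_trans (normc_ge_Re (x - 1)) h.
move: h2; rewrite ltcR; clear h; case: x => a b /=.
rewrite ltr_norml; lra.
Qed.


Lemma sqrtc_diff (x y : C) : sqrtc x + sqrtc y != 0 ->
  sqrtc x - sqrtc y = (x - y) / (sqrtc x + sqrtc y).
Proof.
move=> hS; apply: (mulIf hS); by rewrite divfK // -subr_sqr !sqr_sqrtc.
Qed.

Lemma dv_sqrtc y : `|y - 1| < ((1/2 : R)%:C)%C -> dv (fun w => sqrtc w) y.
Proof.
move=> hy.
have hRy : 1/4 <= ReC y by have := Re_from_norm hy; lra.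
have hsy := Re_sqrtc_big hRy.
have hT : 1 <= `|sqrtc y + sqrtc y| := one_le_norm hsy hsy.
rewrite /dv /derivable.
apply/cvg_ex; exists (sqrtc y + sqrtc y)^-1.
apply/cvgrPdist_lt => e e0.
near=> h.
have hn0 : h != 0 by near: h; exact: (@nbhs_dnbhs_neq C^o 0).
have he : `|h| < e by near: h; exact: (@dnbhs0_lt C C^o e e0).
have h4 : `|h| < ((1/4 : R)%:C)%C.
  near: h; apply: (@dnbhs0_lt C C^o); rewrite ltcR; lra.
have eh : (h%:A : C^o) = h := mulr1 h.
rewrite /= eh.
set x := h + y.
have hx : `|x - 1| < ((3/4 : R)%:C)%C.
  rewrite /x -addrA; apply: le_lt_trans (ler_normD _ _) _.
  rewrite (_ : (3/4 : R) = 1/4 + 1/2); last by field.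
  rewrite (_ : ((1/4 + 1/2 : R)%:C)%C = ((1/4 : R)%:C)%C + ((1/2 : R)%:C)%C); last first.
    by rewrite -raddfD.
  exact: ltrD.
have hRx : 1/4 <= ReC x by have := Re_from_norm hx; lra.
have hsx := Re_sqrtc_big hRx.
have hS : 1 <= `|sqrtc x + sqrtc y| := one_le_norm hsx hsy.
set S := sqrtc x + sqrtc y.
set T := sqrtc y + sqrtc y.
have hS1 : 1 <= `|S| := hS.
have hT1 : 1 <= `|T| := hT.
have nS : 0 < `|S| := lt_le_trans ltr01 hS.
have S0 : S != 0 by rewrite -normr_gt0.
have nT : 0 < `|T| := lt_le_trans ltr01 hT.
have T0 : T != 0 by rewrite -normr_gt0.
have hxy : x - y = h by rewrite /x addrK.
have hd : sqrtc x - sqrtc y = h / S by rewrite sqrtc_diff // hxy.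
rewrite hd.
have eST : S - T = sqrtc x - sqrtc y by rewrite /S /T; ring.
clearbody S T.
have -> : h^-1 *: (h / S) = S^-1 by rewrite /GRing.scale /= mulKf.
have -> : T^-1 - S^-1 = (S - T) / (S * T) by rewrite mulrBl invfM mulrA mulfV // mul1r mulrCA mulfV // mulr1.
rewrite eST.
rewrite hd; apply: le_lt_trans he.
rewrite normrM normfV normrM normfV normrM.
rewrite ler_pdivrMr; last by apply: mulr_gt0.
rewrite ler_pdivrMr //.
rewrite -mulrA; apply: ler_peMr => //.
rewrite -mulrA; apply (le_trans hS1); apply: ler_peMr; first exact: ltW.
apply (le_trans hT1); apply: ler_peMr => //; exact: ltW.
Unshelve. all: by end_near.
Qed.

Lemma one_add_neq0 (u : C) : 0 <= ReC u -> 1 + u != 0.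
Proof.
move=> hu; apply/eqP => /(congr1 (@complex.Re R)).
case: u hu => p q /= hp; lra.
Qed.

Lemma two0 : (2 : C) != 0.
Proof. by rewrite pnatr_eq0. Qed.

Lemma normr_gt0_P1 (x : C) : x != 0 -> 0 < `|x|.
Proof. by rewrite normr_gt0. Qed.

Lemma key (a b : R) (ha : 0 < a) (hb : 0 < b) (N : nat) (hN : (2 <= N)%N)
  (hodd : ~~ odd N) :
  has_pole_of_order (r1N a b N) 1 (2 * N) /\
  has_zero_of_order (r2N a b N) 1 (2 * N).
Proof.
pose P := Pf a b N.
have P1 : P 1 != 0 := Pf1 ha hb hN hodd.
pose D := fun z : C => (z - 1) ^+ (2 * N).
pose Q := fun z => 1 - 4 * D z ^+ 2 / P z ^+ 2.
pose s := fun z => sqrtc (Q z).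
have dP : forall z, z != 0 -> dv P z := fun z hz => @dv_Pf a b N z hz.
have dD : forall z, dv D z.
  move=> z; have H := @dv_exp _ (2 * N) _ (dv_sub (@dv_id z) (@dv_cst 1 z)); exact H.
have dQ : forall z, z != 0 -> P z != 0 -> dv Q z.
  move=> z z0 Pz.
  have H1 := dv_mul (@dv_cst 4 z) (@dv_exp _ 2 _ (dD z)).
  have H2 := dv_inv (f := fun w => P w ^+ 2) (expf_neq0 2 Pz) (@dv_exp _ 2 _ (dP z z0)).
  have H := dv_sub (@dv_cst 1 z) (dv_mul H1 H2); exact H.
have hN0 : (2 * N == 0)%N = false by rewrite muln_eq0 /=; case: (N) hN.
have D1 : D 1 = 0 by rewrite /D subrr expr0n hN0.
have Q1 : Q 1 = 1 by rewrite /Q D1 expr0n /= mulr0 mul0r subr0.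
have s1 : s 1 = 1 by rewrite /s Q1 sqrtc1.
have Pc := dv_cont (dP 1 (oner_neq0 _)).
have Qc := dv_cont (dQ 1 (oner_neq0 _) P1).
have n0 : \forall z \near (1 : C^o), z != 0.
  have H := (cvgrPdist_lt _ _).1 (dv_cont (@dv_id 1)) 1 ltr01.
  near=> z.
  have hz : `|1 - z| < 1 by near: z; exact: H.
  apply/eqP => z0.
  by move: hz; rewrite z0 subr0 normr1 ltxx.
have nP : \forall z \near (1 : C^o), P z != 0.
  have H := (cvgrPdist_lt _ _).1 Pc `|P 1| (normr_gt0_P1 P1).
  near=> z.
  have hz : `|P 1 - P z| < `|P 1| by near: z; exact: H.
  apply/eqP => z0.
  by move: hz; rewrite z0 subr0 ltxx.
have nQ : \forall z \near (1 : C^o), `|Q z - 1| < ((1/2 : R)%:C)%C.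
  have e0 : 0 < ((1/2 : R)%:C)%C :> C by rewrite ltc0R; lra.
  have H := (cvgrPdist_lt _ _).1 Qc _ e0.
  near=> z.
  have hz : `|Q 1 - Q z| < ((1/2 : R)%:C)%C by near: z; exact: H.
  by rewrite distrC -Q1.
have hs1 : forall z, `|Q z - 1| < ((1/2 : R)%:C)%C -> 1 + s z != 0.
  move=> z hz; apply: one_add_neq0.
  have := Re_from_norm hz => h.
  have := Re_sqrtc_big (x := Q z) _; rewrite /s => H.
  have : 1/2 <= ReC (sqrtc (Q z)) by apply: H; lra.
  lra.
have ds : forall z, z != 0 -> P z != 0 -> `|Q z - 1| < ((1/2 : R)%:C)%C -> dv s z.
  move=> z z0 Pz Qz; have H := dv_comp (dQ z z0 Pz) (dv_sqrtc Qz); exact H.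
split.
- exists (fun z => P z * (1 + s z) / 2); split.
  + rewrite /holomorphic_near; near=> z.
    have z0 : z != 0 by near: z; exact: n0.
    have Pz : P z != 0 by near: z; exact: nP.
    have Qz : `|Q z - 1| < ((1/2 : R)%:C)%C by near: z; exact: nQ.
    have H := dv_mul (dv_mul (dP z z0) (dv_add (@dv_cst 1 z) (ds z z0 Pz Qz))) (@dv_cst (2^-1) z).
    exact H.
  + by rewrite s1 mulfK // two0.
  + near=> z.
    have z0 : z != 0 by near: z; apply: nbhs_dnbhs; exact: n0.
    have z1 : z != 1 by near: z; exact: (@nbhs_dnbhs_neq C^o 1).
    have Pz : P z != 0 by near: z; apply: nbhs_dnbhs; exact: nP.
    have Dz : D z != 0 by rewrite /D expf_neq0 // subr_eq0.
    rewrite /r1N /sqrt_t2m4 (@tNE a b N z hodd z0 z1) -/P -/(D z).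
    have -> : 1 - 4 / (P z / D z) ^+ 2 = Q z.
      rewrite /Q; congr (1 - _); field; repeat (apply/andP; split); done.
    rewrite -/(s z); field; repeat (apply/andP; split); done.
- exists (fun z => 2 / (P z * (1 + s z))); split.
  + rewrite /holomorphic_near; near=> z.
    have z0 : z != 0 by near: z; exact: n0.
    have Pz : P z != 0 by near: z; exact: nP.
    have Qz : `|Q z - 1| < ((1/2 : R)%:C)%C by near: z; exact: nQ.
    have H1 := dv_mul (dP z z0) (dv_add (@dv_cst 1 z) (ds z z0 Pz Qz)).
    have H2 := dv_inv (f := fun w => P w * (1 + s w)) (mulf_neq0 Pz (hs1 z Qz)) H1.
    have H := dv_mul (@dv_cst 2 z) H2; exact H.
  + by rewrite s1 mulf_neq0 ?two0 // invr_eq0 mulf_neq0 // two0.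
  + near=> z.
    have z0 : z != 0 by near: z; apply: nbhs_dnbhs; exact: n0.
    have z1 : z != 1 by near: z; exact: (@nbhs_dnbhs_neq C^o 1).
    have Pz : P z != 0 by near: z; apply: nbhs_dnbhs; exact: nP.
    have Qz : `|Q z - 1| < ((1/2 : R)%:C)%C by near: z; apply: nbhs_dnbhs; exact: nQ.
    have Dz : D z != 0 by rewrite /D expf_neq0 // subr_eq0.
    have S0 := hs1 z Qz.
    rewrite /r2N /sqrt_t2m4 (@tNE a b N z hodd z0 z1) -/P -/(D z).
    have -> : 1 - 4 / (P z / D z) ^+ 2 = Q z.
      rewrite /Q; congr (1 - _); field; repeat (apply/andP; split); done.
    rewrite -/(s z).
    have hs2 : s z ^+ 2 = Q z by rewrite sqr_sqrtc.
    have e1 : 1 - s z = 4 * D z ^+ 2 / P z ^+ 2 / (1 + s z).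
      apply: (mulIf S0); rewrite mulfVK // -subr_sqr expr1n hs2 /Q.
      by rewrite opprB addrC subrK.
    have -> : P z / D z - P z / D z * s z = P z / D z * (1 - s z) by ring.
    rewrite e1; field; repeat (apply/andP; split); done.
Unshelve. all: by end_near.
Qed.
End S.

Unset Implicit Arguments.

Theorem lemma3p3 (R : realType) (alpha beta : R)
  (halpha : 0 < alpha < 1) (hbeta : 0 < beta < 1)
  (N : nat) (hN : (2 <= N)%N) (hNeven : ~~ odd N) :
  has_pole_of_order (r1N alpha beta N) 1 (2 * N) /\
  has_zero_of_order (r2N alpha beta N) 1 (2 * N).
Proof.
case/andP: halpha => ha _; case/andP: hbeta => hb _.
exact: key.
Qed.
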